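(* Let $G$ be a finite simple graph. If $x$ is a minimum cost construction sequence for $G$ (i.e. $\nu(x)=\nu_*(G)$), then $x$ is greedy.
   Context: For a finite simple graph $G=(V,E)$ with $\ell=|V|+|E|$, a construction sequence (c-sequence) is a bijection $x:\{1,\dots,\ell\}\to V\sqcup E$ such that every edge $e=uw$ satisfies $x^{-1}(e)>\max\{x^{-1}(u),x^{-1}(w)\}$. The cost of $x$ is $\nu(x)=\sum_{e=uw\in E}\big(2x^{-1}(e)-x^{-1}(u)-x^{-1}(w)\big)$, and $\nu_*(G)$ is the minimum of $\nu(x)$ over all c-sequences for $G$. A c-sequence $x$ is greedy if for every edge $e=uw$ and every vertex $v\notin\{u,w\}$, either $x^{-1}(v)<\max\{x^{-1}(u),x^{-1}(w)\}$ or $x^{-1}(v)>x^{-1}(e)$. *)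

(* Defs.v *)
From mathcomp Require Import all_boot all_order all_algebra.
Set Implicit Arguments. Unset Strict Implicit. Unset Printing Implicit Defensive.

(* A finite simple graph: vertex type V (a finType), adjacency e : rel V,
   symmetric and irreflexive.  Edges are the 2-element vertex sets {u,w}
   with e u w. *)
Definition edgeset (V : finType) (e : rel V) : {set {set V}} :=
  [set s : {set V} | [exists u : V, exists w : V, e u w && (s == [set u; w])]].

Definition edge (V : finType) (e : rel V) := {s : {set V} | s \in edgeset e}.

Definition elt (V : finType) (e : rel V) := (V + edge e)%type.

(* A sequence x : {1..l} -> V ⊔ E, with l = |V|+|E|; position i : 'I_l stands
   for index i+1. *)
Definition seqT (V : finType) (e : rel V) := 'I_#|{: elt e}| -> elt e.

(* x^{-1}(a), with indices in {1,...,l} (0 if a is not hit) *)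
Definition xinv (V : finType) (e : rel V) (x : seqT e) (a : elt e) : nat :=
  if [pick i | x i == a] is Some i then (nat_of_ord i).+1 else 0.

Definition vpos (V : finType) (e : rel V) (x : seqT e) (v : V) : nat :=
  xinv x (inl v).
Definition epos (V : finType) (e : rel V) (x : seqT e) (f : edge e) : nat :=
  xinv x (inr f).

Definition endmax (V : finType) (e : rel V) (x : seqT e) (f : edge e) : nat :=
  \max_(v in val f) vpos x v.

Definition is_cseq (V : finType) (e : rel V) (x : seqT e) : Prop :=
  bijective x /\ forall f : edge e, endmax x f < epos x f.

Definition cost (V : finType) (e : rel V) (x : seqT e) : int :=
  \sum_(f : edge e)
     ((2 * epos x f)%:Z - (\sum_(v in val f) (vpos x v)%:Z))%R.

Definition greedy (V : finType) (e : rel V) (x : seqT e) : Prop :=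
  forall (f : edge e) (v : V), v \notin val f ->
    vpos x v < endmax x f \/ epos x f < vpos x v.

(* Main.v *)
Require Import Defs.
From mathcomp Require Import all_boot all_order all_algebra all_fingroup.
From mathcomp Require Import zify.
Set Implicit Arguments. Unset Strict Implicit.
Import Order.TTheory GRing.Theory Num.Theory.

Lemma xinvE (V : finType) (e : rel V) (x : seqT e) (g : elt e -> 'I_#|{: elt e}|) :
  cancel x g -> cancel g x -> forall a, xinv x a = (g a).+1.
Proof.
move=> c1 c2 a; rewrite /xinv; case: pickP => [i /eqP Hi | H].
  by rewrite -Hi c1.
by move: (H (g a)); rewrite c2 eqxx.
Qed.

Lemma sumxE (V : finType) (e : rel V) (x : seqT e) (g : elt e -> 'I_#|{: elt e}|) :
  cancel x g -> cancel g x -> forall (A : {set V}),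
  (\sum_(v in A) (xinv x (inl v))%:Z = \sum_(v in A) ((g (inl v)).+1)%:Z)%R.
Proof. by move=> c1 c2 A; apply: eq_bigr => v _; rewrite (xinvE c1 c2). Qed.

Lemma arith (a b : nat) (Sy Sx : int) :
  ((2 * a.+1)%:Z - Sy = (2 * b.+1)%:Z - Sx + (2 * (a%:Z - b%:Z) - (Sy - Sx)))%R.
Proof. lia. Qed.

Lemma sum_pos (V : finType) (e : rel V) (z : seqT e) (gz : elt e -> 'I_#|{: elt e}|) :
  cancel z gz -> cancel gz z ->
  (\sum_(a : elt e) (gz a : nat)%:Z = \sum_(k : 'I_#|{: elt e}|) (k : nat)%:Z)%R.
Proof.
move=> c1 c2; rewrite [RHS](reindex gz) //; apply: onW_bij; by exists z.
Qed.

Lemma cost_lt (V : finType) (e : rel V) (x y : seqT e) gx gy :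
  cancel x gx -> cancel gx x -> cancel y gy -> cancel gy y ->
  (forall v, gx (inl v) <= gy (inl v)) -> forall v0, gx (inl v0) < gy (inl v0) ->
  (cost y < cost x)%R.
Proof.
move=> cx cx' cy cy' Hle v0 Hv0; rewrite /cost.
pose D (a : elt e) := ((gy a : nat)%:Z - (gx a : nat)%:Z)%R.
have E : forall g : edge e, ((2 * epos y g)%:Z - \sum_(v in val g) (vpos y v)%:Z =
   (2 * epos x g)%:Z - \sum_(v in val g) (vpos x v)%:Z +
   (2 * D (inr g) - \sum_(v in val g) D (inl v)))%R.
  move=> g; rewrite /epos /vpos !(xinvE cx cx') !(xinvE cy cy').
  have -> : (\sum_(v in val g) D (inl v) = \sum_(v in val g) ((gy (inl v)).+1)%:Z
     - \sum_(v in val g) ((gx (inl v)).+1)%:Z)%R.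
    by rewrite -sumrB; apply: eq_bigr => v _; rewrite /D; lia.
  rewrite (sumxE cx cx') (sumxE cy cy').
  rewrite /D; exact: arith.
rewrite (eq_bigr _ (fun g _ => E g)) big_split /= -[X in (_ < X)%R]addr0 ltrD2l sumrB -mulr_sumr.
have H0 : (\sum_(a : elt e) D a = 0)%R.
  by rewrite /D sumrB (sum_pos cx cx') (sum_pos cy cy') subrr.
rewrite big_sumType /= in H0.
have H1 : (1 <= \sum_(v : V) D (inl v))%R.
  rewrite (bigD1 v0) //=.
  have : (0 <= \sum_(i | i != v0) D (inl i))%R.
    by apply: sumr_ge0 => i _; rewrite /D; have := Hle i; lia.
  move: Hv0; rewrite /D; set s := (\sum_(i | _) _)%R. lia.
have H2 : (0 <= \sum_(g : edge e) \sum_(v in val g) D (inl v))%R.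
  by apply: sumr_ge0 => g _; apply: sumr_ge0 => i _; rewrite /D; have := Hle i; lia.
have -> : (\sum_(g : edge e) \sum_(v in sval g) D (inl v) = \sum_(g : edge e) \sum_(v in val g) D (inl v))%R by [].
move: H0 H1 H2; clear E; clearbody D.
have key : forall a b c : int, (a + b = 0 -> 1 <= a -> 0 <= c -> 2 * b - c < 0)%R by move=> a b c; lia.
exact: key.
Qed.

Definition rn (p Q k : nat) : nat :=
  if k == Q then p else if (p <= k) && (k < Q) then k.+1 else k.

Lemma rn_cases p Q k : (k = Q /\ rn p Q k = p) \/
  (k <> Q /\ p <= k < Q /\ rn p Q k = k.+1) \/
  (k <> Q /\ (k < p \/ Q < k) /\ rn p Q k = k).
Proof.
rewrite /rn; case: eqP => kQ; first by left.
case: ifP => H; right; [left|right]; split => //; split => //; lia.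
Qed.

Lemma rn_lt p Q l k : p < Q -> Q < l -> k < l -> rn p Q k < l.
Proof. move=> h1 h2 h3; have := rn_cases p Q k; lia. Qed.

Lemma rn_inj p Q k1 k2 : p < Q -> rn p Q k1 = rn p Q k2 -> k1 = k2.
Proof. move=> h; have := rn_cases p Q k1; have := rn_cases p Q k2; lia. Qed.

Lemma rn_mono p Q k1 k2 : p < Q -> k1 < k2 -> (k2 = Q -> k1 < p) -> rn p Q k1 < rn p Q k2.
Proof. move=> h h1 h2; have := rn_cases p Q k1; have := rn_cases p Q k2; lia. Qed.

Lemma rn_ge p Q k : p < Q -> k <> Q -> k <= rn p Q k.
Proof. move=> h h1; have := rn_cases p Q k; lia. Qed.

Lemma rn_p p Q : p < Q -> rn p Q p = p.+1.
Proof. move=> h; have := rn_cases p Q p; lia. Qed.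

Theorem lemma1 (V : finType) (e : rel V)
  (e_sym : symmetric e) (e_irr : irreflexive e) (x : seqT e) :
  is_cseq x ->
  (forall y : seqT e, is_cseq y -> (cost x <= cost y)%R) ->
  greedy x.
Proof.
move=> [[gx cx cx'] Hx] Hmin f v Hv.
case: (ltnP (vpos x v) (endmax x f)) => [h|h1]; first by left.
case: (ltnP (epos x f) (vpos x v)) => [h|h2]; first by right.
exfalso.
have gx_inj : injective gx by apply: (can_inj cx').
set l := #|{: elt e}|.
pose p : nat := gx (inl v).
pose Q : nat := gx (inr f).
have Epv : vpos x v = p.+1 by rewrite /vpos (xinvE cx cx').
have Epf : epos x f = Q.+1 by rewrite /epos (xinvE cx cx').
have pQ : p < Q.
  rewrite ltn_neqAle -ltnS -Epf -Epv h2 andbT.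
  apply/negP => /eqP/val_inj/gx_inj; discriminate.
have posx : forall (g : edge e) w, w \in val g -> gx (inl w) < gx (inr g).
  move=> g w wg; have := Hx g.
  have := @leq_bigmax_cond _ (fun w => w \in val g) (fun w => vpos x w) w wg.
  rewrite /endmax /vpos /epos !(xinvE cx cx'); lia.
have Hf : forall w, w \in val f -> gx (inl w) < p.
  move=> w wf; have := @leq_bigmax_cond _ (fun w => w \in val f) (fun w => vpos x w) w wf.
  have : gx (inl w) != gx (inl v).
    apply/negP => /eqP/gx_inj [] ew; by move: Hv; rewrite -ew wf.
  move: h1; rewrite /endmax /vpos /p !(xinvE cx cx').
  move=> h1 hne h3. 
  have : (gx (inl w) : nat) != gx (inl v) by [].
  lia.
have HQl : Q < l by apply: ltn_ord.
pose r (k : 'I_l) : 'I_l := Ordinal (rn_lt pQ HQl (ltn_ord k)).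
have r_inj : injective r.
  move=> k1 k2 /(congr1 val) /= /(rn_inj pQ) H; exact: val_inj.
pose s := perm r_inj.
pose y : seqT e := fun i => x (s^-1%g i).
pose gy := fun a => s (gx a).
have cy : cancel y gy by move=> i; rewrite /y /gy cx permKV.
have cy' : cancel gy y by move=> a; rewrite /y /gy permK cx'.
have gyE : forall a, (gy a : nat) = rn p Q (gx a) by move=> a; rewrite /gy permE.
have Hy : is_cseq y.
  split; first by exists gy.
  move=> g; rewrite /epos (xinvE cy cy') ltnS.
  apply/bigmax_leqP => w wg; rewrite /vpos (xinvE cy cy') !gyE.
  apply: rn_mono => //; first exact: posx.
  move=> eQ; have : gx (inr g) = gx (inr f) by apply: val_inj.
  move/gx_inj => [] egf; apply: Hf; by rewrite -egf.
have : (cost y < cost x)%R.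
  have Hc := @cost_lt _ _ x y gx gy cx cx' cy cy'. apply: (Hc _ v). 
    move=> w; rewrite gyE; apply: rn_ge => //.
    move=> eQ; have : gx (inl w) = gx (inr f) by apply: val_inj.
    by move/gx_inj.
  by rewrite gyE rn_p.
by rewrite ltNge Hmin.
Qed.
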